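(* In the setting below, the function $F=F(\theta,m,\bar a)$ is invariant under $W(m)=\{w\in W: w\circ m=m\}$: $F(wx)=F(x)$ for all $w\in W(m)$ and $x\in\check T\otimes\mathbb{C}$.
   Context: $\mathbb{T}$ is the circle group, $\mathbb{T}[n]$ its subgroup of order $n\ge1$. $G$ is a compact connected Lie group with maximal torus $T$, Weyl group $W$, $\check T=\mathrm{Hom}(\mathbb{T},T)$, $\hat T=\mathrm{Hom}(T,\mathbb{T})$; characters are extended $\mathbb{C}$-linearly to $\check T\otimes\mathbb{C}$ and $\mathbb{Z}[\hat T]$ is viewed as functions of $x\in\check T\otimes\mathbb{C}$ via $\chi\mapsto e^{\chi(x)}$. Let $\xi\in H^4(BG;\mathbb{Z})$ be positive definite, with quadratic form $\phi:\check T\to\mathbb{Z}$ ($\phi(m)$ = coefficient of $z^2$ in $(Bm)^*\xi$), $I(a,b)=\phi(a+b)-\phi(a)-\phi(b)$, $\hat I(a)(b)=I(a,b)$. Fix $\tau$ with $\mathrm{Im}\,\tau>0$, $q=e^{2\pi i\tau}$, $C=\mathbb{C}/(2\pi i\mathbb{Z}+2\pi i\tau\mathbb{Z})$. A theta function of level $\xi$ is $\theta\in\mathbb{Z}[\hat T]((q))$, holomorphic in $(x,\tau)$, with $\theta(x+2\pi i\tau m)=e^{-\hat I(m)(x)}q^{-\phi(m)}\theta(x)$ for $m\in\check T$ and $\theta(wx)=\theta(x)$ for $w\in W$. Let $m:\mathbb{T}[n]\to T$ be a homomorphism, $a\in C$ with $na=0$, $\bar a\in\mathbb{C}$ a lift,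 $\ell,k\in\mathbb{Z}$ with $n\bar a=2\pi i\ell+2\pi i\tau k$, and $\bar m\in\check T$ with $\bar m|_{\mathbb{T}[n]}=m$. Define $F(\theta,m,\bar a)(x)=\exp\big(\tfrac{k}{n}\hat I(\bar m)(x)+\tfrac{k}{n}\phi(\bar m)\bar a\big)\theta(x+\bar m\otimes\bar a)$ (independent of the choice of $\bar m$). *)

(* Defs.v *)
(* Complex numbers are R[i] for R : realType
   (mathcomp-real-closed), viewed as a normed space over themselves via ^o. *)
From HB Require Import structures.
From mathcomp Require Import all_boot all_order all_algebra.
From mathcomp Require Import all_classical all_reals all_analysis.
From mathcomp Require Import complex.
Set Implicit Arguments. Unset Strict Implicit. Unset Printing Implicit Defensive.
Import Order.TTheory GRing.Theory Num.Theory.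
Import numFieldNormedType.Exports.
Local Open Scope classical_set_scope.
Local Open Scope ring_scope.
Local Open Scope complex_scope.

Notation CC R := ((R[i])^o).

Section Defs.
Variable R : realType.
Local Notation C := (CC R).

Definition cexp (z : C) : C :=
  (expR (complex.Re z))%:C * ((cos (complex.Im z))%:C + 'i * (sin (complex.Im z))%:C).

Definition twopii : C := (2 * pi)%:C * 'i.

Definition qq (tau : C) : C := cexp (twopii * tau).

Variable r : nat.
(* The maximal torus T is identified with (T)^r = {t in C^r | |t_j| = 1};
   its cocharacter lattice Tv = Hom(T,T) and character lattice Th = Hom(T,T)
   are both identified with 'rV[int]_r:  the cocharacter m is
   z |-> (z^(m_1), ..., z^(m_r)),  the character chi is t |-> prod_j t_j^(chi_j).
   Tv (x) C = 'rV[C]_r and characters are extended C-linearly. *)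

Definition char_eval (chi : 'rV[int]_r) (x : 'rV[C]_r) : C :=
  \sum_(j < r) (chi 0 j)%:~R * x 0 j.

Definition toC (m : 'rV[int]_r) : 'rV[C]_r := map_mx (fun z : int => z%:~R) m.

Definition tens (m : 'rV[int]_r) (a : C) : 'rV[C]_r := a *: toC m.

(* An element w of the Weyl group is an automorphism of T, given by an integral
   matrix: it acts on cocharacters by m |-> m *m w, on Tv (x) C by x |-> x *m w,
   and on T by t |-> (prod_i t_i^(w_ij))_j, so that w o m = (m *m w) on
   cocharacters. *)
Definition act_cochar (w : 'M[int]_r) (m : 'rV[int]_r) : 'rV[int]_r := m *m w.
Definition act_lie (w : 'M[int]_r) (x : 'rV[C]_r) : 'rV[C]_r := x *m map_mx (fun z : int => z%:~R) w.
Definition act_torus (w : 'M[int]_r) (t : 'rV[C]_r) : 'rV[C]_r :=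
  \row_(j < r) \prod_(i < r) (t 0 i) ^ (w i j).

Definition finite_matrix_group (W : seq 'M[int]_r) : Prop :=
  [/\ 1%:M \in W,
      (forall v w, v \in W -> w \in W -> v *m w \in W) &
      (forall w, w \in W -> exists2 w', w' \in W & w *m w' = 1%:M /\ w' *m w = 1%:M)].

(* The element xi of H^4(BG;Z) restricted to H^4(BT;Z) = Sym^2(Th) is the
   integral quadratic polynomial  sum_{i<=j} A_ij t_i t_j  in the generators
   t_i of H^2(BT;Z) = Th.  phi(m) is the coefficient of z^2 in (Bm)^* xi. *)
Definition phi (A : 'M[int]_r) (m : 'rV[int]_r) : int :=
  \sum_(i < r) \sum_(j < r | (i <= j)%N) A i j * m 0 i * m 0 j.

Definition Iform (A : 'M[int]_r) (a b : 'rV[int]_r) : int :=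
  phi A (a + b) - phi A a - phi A b.

Definition unitv (j : 'I_r) : 'rV[int]_r := \row_(k < r) (k == j)%:R.

Definition Ihat (A : 'M[int]_r) (a : 'rV[int]_r) : 'rV[int]_r :=
  \row_(j < r) Iform A a (unitv j).

(* xi comes from H^4(BG), hence is W-invariant, and is positive definite *)
Definition level_form (W : seq 'M[int]_r) (A : 'M[int]_r) : Prop :=
  (forall w m, w \in W -> phi A (act_cochar w m) = phi A m) /\
  (forall m, m != 0 -> 0 < phi A m).

(* An element of Z[Th]: a finite formal sum  sum c_chi chi, represented by a list
   of (coefficient, character) pairs; as a function of x it is
   sum c_chi e^{chi(x)}. *)
Definition eval_grpring (s : seq (int * 'rV[int]_r)) (x : 'rV[C]_r) : C :=
  \sum_(p <- s) (p.1)%:~R * cexp (char_eval p.2 x).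

(* theta : (tau, x) |-> theta(x) (for Im tau > 0).
   theta is a theta function of level xi:
   - theta is an element sum_{k >= k0} q^k theta_k of Z[Th]((q)), i.e. the series
     converges to theta(x) for every x and every tau in the upper half plane;
   - theta is holomorphic in (x, tau) on (Tv (x) C) x H;
   - theta(x + 2 pi i tau m) = e^{-\hat I(m)(x)} q^{-phi(m)} theta(x);
   - theta(w x) = theta(x) for w in W. *)
Definition theta_function (W : seq 'M[int]_r) (A : 'M[int]_r)
    (theta : C -> 'rV[C]_r -> C) : Prop :=
  [/\ (exists (k0 : int) (c : nat -> seq (int * 'rV[int]_r)),
         forall (tau : C) (x : 'rV[C]_r), 0 < complex.Im tau ->
           (fun N : nat => \sum_(j < N) qq tau ^ (k0 + j%:Z) * eval_grpring (c j) x)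
             @ \oo --> theta tau x),
      (forall (tau : C) (x : 'rV[C]_r), 0 < complex.Im tau ->
         differentiable (fun p : 'rV[C]_r * C => theta p.2 p.1) (x, tau)),
      (forall (tau : C) (m : 'rV[int]_r) (x : 'rV[C]_r), 0 < complex.Im tau ->
         theta tau (x + tens m (twopii * tau))
         = cexp (- char_eval (Ihat A m) x) * qq tau ^ (- phi A m) * theta tau x) &
      (forall (tau : C) (w : 'M[int]_r) (x : 'rV[C]_r), 0 < complex.Im tau -> w \in W ->
         theta tau (act_lie w x) = theta tau x)].

(* The subgroup T[n] of T is {z in C | z^n = 1}.  A homomorphism
   m : T[n] -> T is a function C -> C^r (only its values on T[n] matter)
   which is multiplicative on T[n] with values in T. *)
Definition in_Tn (n : nat) (z : C) : Prop := z ^+ n = 1.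

Definition hom_Tn_T (n : nat) (m : C -> 'rV[C]_r) : Prop :=
  (forall z, in_Tn n z -> forall j, `|m z 0 j| = 1) /\
  (forall z z', in_Tn n z -> in_Tn n z' ->
     m (z * z') = \row_(j < r) (m z 0 j * m z' 0 j)).

Definition restricts_to (n : nat) (mbar : 'rV[int]_r) (m : C -> 'rV[C]_r) : Prop :=
  forall z, in_Tn n z -> m z = \row_(j < r) z ^ (mbar 0 j).

Definition in_Wm (W : seq 'M[int]_r) (n : nat) (m : C -> 'rV[C]_r) (w : 'M[int]_r) : Prop :=
  w \in W /\ forall z, in_Tn n z -> act_torus w (m z) = m z.

Definition Ffun (A : 'M[int]_r) (theta : C -> 'rV[C]_r -> C) (tau : C)
    (n : nat) (k : int) (mbar : 'rV[int]_r) (abar : C) (x : 'rV[C]_r) : C :=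
  cexp ((k%:~R / n%:R) * char_eval (Ihat A mbar) x
        + (k%:~R / n%:R) * (phi A mbar)%:~R * abar)
  * theta tau (x + tens mbar abar).

End Defs.

(* Main.v *)
Require Import Defs.
From HB Require Import structures.
From mathcomp Require Import all_boot all_order all_algebra all_field all_fingroup all_solvable.
From mathcomp Require Import all_classical all_reals all_analysis.
From mathcomp Require Import complex.
From mathcomp Require Import ring lra.
Import Order.TTheory GRing.Theory Num.Theory.
Import numFieldNormedType.Exports.
Local Open Scope ring_scope.
Local Open Scope complex_scope.
Lemma hphiD (x y z : int) : x = y + z + (x - y - z). Proof. ring. Qed.
Section Bil.
Variables (r : nat) (A : 'M[int]_r).
Let h1 (p q s t u : int) : p * (q + s) * (t + u) - p * q * t - p * s * u = p * (q * u + s * t).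
Proof. ring. Qed.
Let h2 (p q s t u q' t' : int) : p * ((q + q') * t + s * (u + t')) = p * (q * t + s * u) + p * (q' * t + s * t').
Proof. ring. Qed.
Let h3 (c p q s t u : int) : p * (c * q * t + s * (c * u)) = c * (p * (q * t + s * u)).
Proof. ring. Qed.
Let h4 (p q s t u : int) : p * (q * t + s * u) = p * (s * u + q * t).
Proof. ring. Qed.
Let h5 (c p q t : int) : p * (c * q) * (c * t) = c ^+ 2 * (p * q * t).
Proof. ring. Qed.
Lemma IformE a b : Iform A a b =
  \sum_(i < r) \sum_(j < r | (i <= j)%N) A i j * (a 0 i * b 0 j + b 0 i * a 0 j).
Proof.
rewrite /Iform /phi -!sumrB; apply eq_bigr=> i _; rewrite -!sumrB; apply eq_bigr => j _.
rewrite !mxE; exact: h1.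
Qed.
Lemma IformDl a1 a2 b : Iform A (a1 + a2) b = Iform A a1 b + Iform A a2 b.
Proof.
rewrite !IformE -big_split; apply eq_bigr=> i _; rewrite -big_split; apply eq_bigr => j _.
rewrite !mxE; exact: h2.
Qed.
Lemma IformZl c a b : Iform A (c *: a) b = c * Iform A a b.
Proof.
rewrite !IformE big_distrr; apply eq_bigr=> i _; rewrite big_distrr; apply eq_bigr => j _.
rewrite !mxE; exact: h3.
Qed.
Lemma IformC a b : Iform A a b = Iform A b a.
Proof.
rewrite !IformE; apply eq_bigr=> i _; apply eq_bigr => j _; exact: h4.
Qed.
Lemma IformDr a b1 b2 : Iform A a (b1 + b2) = Iform A a b1 + Iform A a b2.
Proof. by rewrite IformC IformDl IformC (IformC b2). Qed.
Lemma IformZr c a b : Iform A a (c *: b) = c * Iform A a b.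
Proof. by rewrite IformC IformZl IformC. Qed.
Lemma Iform0r a : Iform A a 0 = 0.
Proof. by rewrite -(scale0r (0 : 'rV[int]_r)) IformZr mul0r. Qed.
Lemma phiD a b : phi A (a + b) = phi A a + phi A b + Iform A a b.
Proof. exact: hphiD. Qed.
Lemma phiZ c a : phi A (c *: a) = c ^+ 2 * phi A a.
Proof.
rewrite /phi big_distrr; apply eq_bigr=> i _; rewrite big_distrr; apply eq_bigr => j _.
rewrite !mxE; exact: h5.
Qed.
Lemma unitvE (j : 'I_r) : unitv j = delta_mx (0 : 'I_1) j.
Proof. apply/matrixP => i k; rewrite !mxE (ord1 i) eqxx /=; by case: (k == j). Qed.
Lemma Iform_sum a b : Iform A a b = \sum_(j < r) b 0 j * Iform A a (unitv j).
Proof.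
rewrite {1}(row_sum_delta b).
rewrite (big_morph (Iform A a) (IformDr a) (Iform0r a)).
apply eq_bigr => j _; by rewrite IformZr unitvE.
Qed.
Lemma Iform_inv w a b : (forall m, phi A (act_cochar w m) = phi A m) ->
  Iform A (a *m w) (b *m w) = Iform A a b.
Proof. move=> h; by rewrite /Iform -mulmxDl -!/(act_cochar w _) !h. Qed.
End Bil.
Arguments IformE {r}.
Arguments IformDl {r}.
Arguments IformZl {r}.
Arguments IformC {r}.
Arguments IformDr {r}.
Arguments IformZr {r}.
Arguments Iform0r {r}.
Arguments phiD {r}.
Arguments phiZ {r}.
Arguments unitvE {r}.
Arguments Iform_sum {r}.
Arguments Iform_inv {r}.
Section CL.
Variable R : realType.
Local Notation C := (CC R).
Lemma cexpD (a b : C) : cexp (a+b) = cexp a * cexp b.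
Proof.
case: a => a1 a2; case: b => b1 b2. rewrite /cexp /=.
rewrite expRD cosD sinD.
apply/eqP; rewrite eq_complex /=; apply/andP; split; apply/eqP; ring.
Qed.
Lemma cexp0 : cexp (0 : C) = 1.
Proof. rewrite /cexp /= expR0 cos0 sin0; apply/eqP; rewrite eq_complex /=; apply/andP; split; apply/eqP; ring. Qed.
Lemma cexp2pi : cexp (twopii R) = 1.
Proof.
rewrite /cexp /twopii /= !mulr0 !mulr1 !subr0 !addr0 expR0 (mulr_natl pi 2) cos2pi sin2pi.
apply/eqP; rewrite eq_complex /=; apply/andP; split; apply/eqP; ring.
Qed.
Lemma cexpN (a : C) : cexp (- a) = (cexp a)^-1.
Proof. apply/esym/mulr1_eq. by rewrite -cexpD subrr cexp0. Qed.
Lemma cexp_nat (z : C) (n : nat) : cexp (n%:R * z) = cexp z ^+ n.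
Proof.
elim: n => [|n IH]; first by rewrite mul0r cexp0 expr0.
by rewrite -addn1 natrD mulrDl mul1r cexpD IH exprD expr1.
Qed.
Lemma cexpz (z : C) (j : int) : cexp (j%:~R * z) = cexp z ^ j.
Proof.
case: j => n; first exact: (cexp_nat z n).
change (cexp ((- (n.+1)%:R) * z) = (cexp z ^+ n.+1)^-1).
by rewrite mulNr cexpN cexp_nat.
Qed.
Lemma cexp_per (z : C) (j : int) : cexp (z + twopii R * j%:~R) = cexp z.
Proof. by rewrite cexpD [twopii R * _]mulrC cexpz cexp2pi exp1rz mulr1. Qed.

Variable r : nat.
Lemma intr_sum (I : Type) (s : seq I) (F : I -> int) :
  (\sum_(i <- s) F i)%:~R = \sum_(i <- s) (F i)%:~R :> C.
Proof. by rewrite (big_morph (fun z : int => (z%:~R : C)) (@intrD _) (mulr0z 1)). Qed.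
Lemma ceD (chi : 'rV[int]_r) (x y : 'rV[C]_r) : char_eval chi (x + y) = char_eval chi x + char_eval chi y.
Proof. rewrite /char_eval -big_split; apply eq_bigr => j _; by rewrite !mxE mulrDr. Qed.
Lemma ceZ (chi : 'rV[int]_r) (c : C) (x : 'rV[C]_r) : char_eval chi (c *: x) = c * char_eval chi x.
Proof. rewrite /char_eval big_distrr; apply eq_bigr => j _; by rewrite !mxE mulrCA. Qed.
Lemma ce_toC (chi u : 'rV[int]_r) : char_eval chi (toC R u) = (\sum_(j < r) chi 0 j * u 0 j)%:~R.
Proof. rewrite /char_eval intr_sum; apply eq_bigr => j _; by rewrite !mxE intrM. Qed.
Variable A : 'M[int]_r.
Lemma ceIh_toC (a b : 'rV[int]_r) : char_eval (Ihat A a) (toC R b) = (Iform A a b)%:~R.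
Proof.
rewrite ce_toC (Iform_sum A a b); congr (_ %:~R); apply eq_bigr => j _; by rewrite mxE mulrC.
Qed.
Lemma ceIhD (a b : 'rV[int]_r) (x : 'rV[C]_r) : char_eval (Ihat A (a + b)) x = char_eval (Ihat A a) x + char_eval (Ihat A b) x.
Proof. rewrite /char_eval -big_split; apply eq_bigr => j _; by rewrite !mxE IformDl intrD mulrDl. Qed.
Lemma ceIhZ c (a : 'rV[int]_r) (x : 'rV[C]_r) : char_eval (Ihat A (c *: a)) x = c%:~R * char_eval (Ihat A a) x.
Proof. rewrite /char_eval big_distrr; apply eq_bigr => j _; by rewrite !mxE IformZl intrM -mulrA. Qed.
Lemma ceIh_act (w w' : 'M[int]_r) (a : 'rV[int]_r) (x : 'rV[C]_r) :
  w *m w' = 1%:M ->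
  (forall p q, Iform A (p *m w') (q *m w') = Iform A p q) ->
  char_eval (Ihat A a) (act_lie w x) = char_eval (Ihat A (a *m w')) x.
Proof.
move=> ww' inv.
have key i : Iform A (a *m w') (unitv i) = \sum_(j < r) w i j * Iform A a (unitv j).
  rewrite -{1}(mulmx1 (unitv i)) -ww' mulmxA inv (Iform_sum A a).
  apply eq_bigr => j _; by rewrite unitvE -rowE mxE.
rewrite /char_eval /act_lie.
under eq_bigr => j _ do rewrite !mxE big_distrr /=.
rewrite exchange_big /=; apply eq_bigr => i _.
rewrite !mxE key intr_sum big_distrl /=; apply eq_bigr => j _.
rewrite !mxE intrM.
by rewrite mulrCA mulrC [(Iform _ _ _)%:~R * _]mulrC.
Qed.
Lemma theta_per (W : seq 'M[int]_r) (theta : C -> 'rV[C]_r -> C) (tau : C) :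
  theta_function W A theta -> 0 < complex.Im tau ->
  forall (y : 'rV[C]_r) (u : 'rV[int]_r), theta tau (y + tens u (twopii R)) = theta tau y.
Proof.
case => [[k0 [c hc]] _ _ _] ht y u.
have e s : eval_grpring s (y + tens u (twopii R)) = eval_grpring s y.
  rewrite /eval_grpring; apply eq_bigr => p _.
  by rewrite /tens ceD ceZ ce_toC cexp_per.
have h1 := hc tau (y + tens u (twopii R)) ht.
have h2 := hc tau y ht.
have ef : (fun N : nat => \sum_(j < N) qq tau ^ (k0 + j%:Z) * eval_grpring (c j) (y + tens u (twopii R)))
  = (fun N : nat => \sum_(j < N) qq tau ^ (k0 + j%:Z) * eval_grpring (c j) y).
  apply/funext => N; apply eq_bigr => j _; by rewrite e.
rewrite ef in h1.
exact: (cvg_unique (@norm_hausdorff _ _) h1 h2).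
Qed.
End CL.
Section Div.
Variable R : realType.
Local Notation C := (CC R).
Lemma prim_exists n : (n > 0)%N -> exists z : R[i], n.-primitive_root z.
Proof.
pose p : {poly R[i]} := 'X^n - 1; have [r Dp] := closed_field_poly_normal p.
move=> n_gt0; rewrite (monicP _) ?monicXnsubC // scale1r in Dp.
have rn1: all n.-unity_root r by apply/allP=> z; rewrite -root_prod_XsubC -Dp.
have sz_r: (n < (size r).+1)%N.
  by rewrite -(size_prod_XsubC r id) -Dp size_XnsubC.
have [|z] := hasP (has_prim_root n_gt0 rn1 _ sz_r); last by exists z.
by rewrite -separable_prod_XsubC -Dp separable_Xn_sub_1 // pnatr_eq0 -lt0n.
Qed.
Lemma prim_dvdz n (z : C) (d : int) : n.-primitive_root z -> z ^ d = 1 -> (n%:Z %| d)%Z.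
Proof.
move=> pz; rewrite dvdzE /=; case: d => p /=.
  by move=> h; rewrite (prim_order_dvd pz); apply/eqP; exact: h.
move=> h; rewrite (prim_order_dvd pz); rewrite -invr_eq1; exact/eqP.
Qed.
Variable r : nat.
Lemma div_lemma (n : nat) (m : C -> 'rV[C]_r) (mbar : 'rV[int]_r) (w : 'M[int]_r) :
  (1 <= n)%N -> restricts_to n mbar m ->
  (forall z, in_Tn n z -> act_torus w (m z) = m z) ->
  exists u : 'rV[int]_r, mbar *m w = mbar + n%:Z *: u.
Proof.
move=> n1 res hw.
have [z0 pz] := @prim_exists n n1.
have zn : in_Tn n (z0 : C) by exact: prim_expr_order pz.
have zu : (z0 : C) \is a GRing.unit.
  by rewrite -(unitrX_pos _ n1) zn unitr1.
have H := hw z0 zn; rewrite (res z0 zn) in H.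
have dj (j : 'I_r) : (n%:Z %| (mbar *m w) ord0 j - mbar ord0 j)%Z.
  apply: (@prim_dvdz n (z0 : C) _ pz).
  have := congr1 (fun M : 'rV[C]_r => M 0 j) H; rewrite /act_torus !mxE.
  under eq_bigr => i _ do rewrite mxE exprz_exp.
  rewrite -(big_morph (fun e : int => (z0 : C) ^ e) (exprzDr zu) (expr0z _)).
  move=> e; rewrite exprzDr // e -exprzDr // subrr expr0z //.
exists (\row_j (((mbar *m w) ord0 j - mbar ord0 j) %/ n%:Z)%Z).
apply/matrixP => i j; rewrite (ord1 i) !mxE mulrC divzK; first by rewrite addrC subrK.
by have := dj j; rewrite mxE.
Qed.
End Div.
Lemma hI (P Q I n : int) : n != 0 -> P + n ^+ 2 * Q + n * I = P -> I = - (n * Q).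
Proof.
move=> nz e.
have h : n * (I + n * Q) = 0.
  transitivity (P + n ^+ 2 * Q + n * I - P); first ring.
  by rewrite e subrr.
move/eqP: h; rewrite mulf_eq0 (negbTE nz) /= addr_eq0 => /eqP ->. by [].
Qed.
Lemma hB (R : realType) (x a mj vj N L K t P : CC R) : N * a = P * L + P * t * K ->
  x + a * (mj + N * vj) = x + a * mj + P * t * (K * vj) + P * (L * vj).
Proof.
move=> e. have -> : a * (mj + N * vj) = a * mj + (N * a) * vj by ring.
rewrite e; ring.
Qed.

Lemma hE (R : realType) (K N L X Y P Q T t : CC R) : N != 0 ->
 K / N * (Y + N * X) + K / N * P * ((T * L + T * t * K) / N) +
 (- (K * (X + (T * L + T * t * K) / N * - (N * Q))) + - (K * K * Q) * (T * t)) + T * - (K * L * Q) =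
 K / N * Y + K / N * P * ((T * L + T * t * K) / N).
Proof. move=> nz. field. exact: nz. Qed.

Theorem lemma5p3 (R : realType) (r : nat) (W : seq 'M[int]_r) (A : 'M[int]_r)
    (theta : CC R -> 'rV[CC R]_r -> CC R) (tau : CC R)
    (n : nat) (m : CC R -> 'rV[CC R]_r) (abar : CC R) (l k : int)
    (mbar : 'rV[int]_r) :
  finite_matrix_group W ->
  level_form W A ->
  theta_function W A theta ->
  0 < complex.Im tau ->
  (1 <= n)%N ->
  hom_Tn_T n m ->
  n%:R * abar = twopii R * l%:~R + twopii R * tau * k%:~R ->
  restricts_to n mbar m ->
  forall w, in_Wm W n m w ->
  forall x : 'rV[CC R]_r,
    Ffun A theta tau n k mbar abar (act_lie w x) = Ffun A theta tau n k mbar abar x.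
Proof.
move=> fg lf th Htau n1 hom Hna res w [wW wm] x.
case: fg => _ _ invW; have [w' w'W [ww' w'w]] := invW w wW.
case: (lf) => phiW _.
have pw' mm : phi A (act_cochar w' mm) = phi A mm := phiW w' mm w'W.
have Iw' p q : Iform A (p *m w') (q *m w') = Iform A p q := Iform_inv A w' p q pw'.
have [u Hu] := @div_lemma _ _ _ _ _ _ n1 res wm.
set v := - (u *m w').
have HM : mbar *m w' = mbar + n%:Z *: v.
  have e : mbar = (mbar *m w) *m w' by rewrite -mulmxA ww' mulmx1.
  rewrite Hu mulmxDl -scalemxAl in e.
  by rewrite /v scalerN [in RHS]e addrK.
have nz : n%:Z != 0 by move: n1; clear; case: n.
have IMv : Iform A mbar v = - (n%:Z * phi A v).
  apply: (@hI (phi A mbar) _ _ _ nz). have := pw' mbar; by rewrite /act_cochar HM phiD phiZ IformZr.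
case: (th) => _ _ th3 th4.
rewrite /Ffun.
have tA : theta tau (act_lie w x + tens mbar abar) = theta tau (x + tens (mbar *m w') abar).
  rewrite -(th4 tau w' _ Htau w'W); congr (theta tau _).
  rewrite /act_lie mulmxDl -mulmxA -map_mxM ww' map_mx1 mulmx1; congr (_ + _).
  by rewrite /tens /toC -scalemxAl -map_mxM.
rewrite tA HM.
set y := x + tens mbar abar.
have tB : x + tens (mbar + n%:Z *: v) abar =
   (y + tens (k *: v) (twopii R * tau)) + tens (l *: v) (twopii R).
  rewrite /y /tens /toC; apply/matrixP => i j; rewrite !mxE !intrD !intrM.
  apply: hB; exact: Hna.
rewrite tB (@theta_per _ _ _ _ _ _ th Htau) th3 //.
rewrite (@ceIh_act _ _ _ w w' mbar x ww' Iw') HM ceIhD !ceIhZ /y ceD /tens ceZ ceIh_toC IformC IMv phiZ.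
rewrite /qq -cexpz -cexpD [cexp _ * (_ * _)]mulrA -cexpD; congr (_ * _).
rewrite -(@cexp_per R _ (- (k * l * phi A v))); congr cexp.
have nC : (n%:Z)%:~R = n%:R :> CC R by [].
have Ha : abar = (twopii R * l%:~R + twopii R * tau * k%:~R) / n%:R.
  by rewrite -Hna mulrAC divff ?mul1r // pnatr_eq0 -lt0n.
rewrite expr2 !(intrN, intrM) nC Ha.
apply: hE; by rewrite pnatr_eq0 -lt0n.
Qed.
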